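(* $\kappa_1(\Lambda_1,\Lambda_2)\le\max\{\mu_c(\Lambda_1,\Phi_1;\Phi_2),\ \mu_c(\Lambda_2,\Phi_2;\Phi_1)\}$.
   Context: Let $\mathcal H$ be a separable Hilbert space and let $\Phi_1=(\phi_{1i})_{i\in I}$ and $\Phi_2=(\phi_{2j})_{j\in J}$ be Parseval frames for $\mathcal H$, with analysis operators $\Phi_1^*f=(\langle f,\phi_{1i}\rangle)_{i\in I}$, $\Phi_2^*f=(\langle f,\phi_{2j}\rangle)_{j\in J}$. For an index subset $\Lambda$, $\mathbf 1_\Lambda$ restricts a coefficient sequence to $\Lambda$; $\|\cdot\|_1$ is the (possibly infinite) $\ell^1$ norm. Fix $\Lambda_1\subset I$, $\Lambda_2\subset J$. Mixed joint concentration: $\kappa_1(\Lambda_1,\Lambda_2)=\sup_{x,y\in\mathcal H}\frac{\|\mathbf 1_{\Lambda_1}\Phi_1^*x\|_1+\|\mathbf 1_{\Lambda_2}\Phi_2^*y\|_1}{\|\Phi_1^*y\|_1+\|\Phi_2^*x\|_1}$. Cluster coherence: $\mu_c(\Lambda_1,\Phi_1;\Phi_2)=\max_{j\in J}\sum_{i\in\Lambda_1}|\langle\phi_{1i},\phi_{2j}\rangle|$ and $\mu_c(\Lambda_2,\Phi_2;\Phi_1)=\max_{i\in I}\sum_{j\in\Lambda_2}|\langle\phi_{2j},\phi_{1i}\rangle|$ (suprema if maxima are not attained). *)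

(* Defs.v *)
From mathcomp Require Import all_boot all_order all_algebra.
From mathcomp Require Import all_classical all_reals all_analysis.
From mathcomp Require Import complex.
Import Order.TTheory GRing.Theory Num.Theory.

Set Implicit Arguments.
Unset Strict Implicit.
Unset Printing Implicit Defensive.

Local Open Scope ring_scope.
Local Open Scope classical_set_scope.

Section Hilbert.
Variables (R : realType) (H : lmodType R[i]).
Variable ip : H -> H -> R[i].

Definition is_inner_product : Prop :=
  [/\ (forall (a : R[i]) (x y z : H), ip (a *: x + y) z = a * ip x z + ip y z),
      (forall x y : H, ip y x = (ip x y)^*%C),
      (forall x : H, 0 <= ip x x) &
      (forall x : H, ip x x = 0 -> x = 0)].

Definition hnorm (x : H) : R := Num.sqrt (complex.Re (ip x x)).

Definition hcomplete : Prop :=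
  forall u : nat -> H,
    (forall e : R, 0 < e -> exists N : nat, forall m n : nat,
        (N <= m)%N -> (N <= n)%N -> hnorm (u m - u n) < e) ->
    exists l : H, forall e : R, 0 < e -> exists N : nat, forall n : nat,
        (N <= n)%N -> hnorm (u n - l) < e.

Definition hseparable : Prop :=
  exists d : nat -> H, forall (x : H) (e : R), 0 < e ->
    exists n : nat, hnorm (x - d n) < e.

Definition separable_hilbert : Prop :=
  [/\ is_inner_product, hcomplete & hseparable].

Local Open Scope ereal_scope.

Definition cmod (z : R[i]) : R := Normc.normc z.

Definition parseval_frame (I : choiceType) (phi : I -> H) : Prop :=
  forall f : H,
    \esum_(i in [set: I]) ((cmod (ip f (phi i))) ^+ 2)%:E = ((hnorm f) ^+ 2)%:E.

Definition coef_l1 (I : choiceType) (phi : I -> H) (Lam : set I) (f : H)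
  : \bar R :=
  \esum_(i in Lam) (cmod (ip f (phi i)))%:E.

Definition kappa1 (I J : choiceType) (phi1 : I -> H) (phi2 : J -> H)
  (Lam1 : set I) (Lam2 : set J) : \bar R :=
  ereal_sup [set r | exists x y : H,
    let den := coef_l1 phi1 [set: I] y + coef_l1 phi2 [set: J] x in
    [/\ 0 < den, den < +oo &
        r = (coef_l1 phi1 Lam1 x + coef_l1 phi2 Lam2 y) / den]].

Definition cluster_coherence (I J : choiceType) (Lam : set I)
  (phi : I -> H) (psi : J -> H) : \bar R :=
  ereal_sup [set \esum_(i in Lam) (cmod (ip (phi i) (psi j)))%:E | j in [set: J]].

End Hilbert.

(* Main.v *)
Require Import Defs.
From mathcomp Require Import all_boot all_order all_algebra.
From mathcomp Require Import all_classical all_reals all_analysis.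
From mathcomp Require Import complex.
From mathcomp Require Import lra ring.
Import Order.TTheory GRing.Theory Num.Theory.

Set Implicit Arguments.
Unset Strict Implicit.
Unset Printing Implicit Defensive.

Local Open Scope ring_scope.
Local Open Scope classical_set_scope.

Section CplxLemmas.
Variable R : realType.
Implicit Types z w : R[i].

Lemma cmodE (a b : R) : cmod (a +i* b)%C = Num.sqrt (a ^+ 2 + b ^+ 2).
Proof. by []. Qed.

Lemma cmod_ge0 z : 0 <= cmod z.
Proof. by case: z => a b; rewrite cmodE sqrtr_ge0. Qed.

Lemma cmod_sqr z : cmod z ^+ 2 = complex.Re z ^+ 2 + complex.Im z ^+ 2.
Proof. by case: z => a b; rewrite cmodE sqr_sqrtr // addr_ge0 // sqr_ge0. Qed.

Lemma cmodM z w : cmod (z * w) = cmod z * cmod w.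
Proof. exact: Normc.normcM. Qed.

Lemma cmodD z w : cmod (z + w) <= cmod z + cmod w.
Proof. exact: (@le_normcD R z w). Qed.

Lemma cmodJ z : cmod (z^*)%C = cmod z.
Proof. by case: z => a b; rewrite /cmod /= sqrrN. Qed.

Lemma cmod_real (r : R) : 0 <= r -> cmod (r%:C)%C = r.
Proof.
by move=> r0; rewrite /cmod /= expr0n /= addr0 sqrtr_sqr ger0_norm.
Qed.

Lemma ReD z w : complex.Re (z + w) = complex.Re z + complex.Re w.
Proof. by case: z; case: w. Qed.
Lemma ImD z w : complex.Im (z + w) = complex.Im z + complex.Im w.
Proof. by case: z; case: w. Qed.
Lemma ReB z w : complex.Re (z - w) = complex.Re z - complex.Re w.
Proof. by case: z; case: w. Qed.
Lemma ImB z w : complex.Im (z - w) = complex.Im z - complex.Im w.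
Proof. by case: z; case: w. Qed.

Lemma cmod_key z w :
  cmod (z + w) ^+ 2 <= cmod (z - w) ^+ 2 + 4 * (cmod z * cmod w).
Proof.
have hA := cmod_sqr z; have hB := cmod_sqr w.
have A0 := cmod_ge0 z; have B0 := cmod_ge0 w.
rewrite !cmod_sqr ReD ImD ReB ImB.
move: hA hB A0 B0.
set A := cmod z; set B := cmod w.
set a1 := complex.Re z; set a2 := complex.Im z.
set b1 := complex.Re w; set b2 := complex.Im w => hA hB A0 B0.
suff : a1 * b1 + a2 * b2 <= A * B by lra.
have h1 : (a1 * b1 + a2 * b2) ^+ 2 <= (A * B) ^+ 2.
  rewrite exprMn hA hB; have := sqr_ge0 (a1 * b2 - a2 * b1); nra.
have AB0 : 0 <= A * B by rewrite mulr_ge0.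
have [hp|hp] := lerP (a1 * b1 + a2 * b2) 0; first by lra.
by rewrite -(ler_pXn2r (n:=2)) // ?nnegrE ?ltW.
Qed.

End CplxLemmas.

Section IP.
Variables (R : realType) (H : lmodType R[i]) (ip : H -> H -> R[i]).
Hypothesis hip : is_inner_product ip.

Lemma ipD_l x y z : ip (x + y) z = ip x z + ip y z.
Proof. by move: hip => h; rewrite /is_inner_product in h; case: h => [lin _ _ _]; rewrite -{1}[x]scale1r lin mul1r. Qed.

Lemma ip0_l z : ip 0 z = 0.
Proof.
have := ipD_l 0 0 z; rewrite addr0 => h.
by apply: (@addrI _ (ip 0 z)); rewrite addr0 -h.
Qed.

Lemma ipZ_l a x z : ip (a *: x) z = a * ip x z.
Proof. by move: hip => h; rewrite /is_inner_product in h; case: h => [lin _ _ _]; rewrite -[a *: x]addr0 lin ip0_l addr0. Qed.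

Lemma ipN_l x z : ip (- x) z = - ip x z.
Proof. by rewrite -scaleN1r ipZ_l mulN1r. Qed.

Lemma ipB_l x y z : ip (x - y) z = ip x z - ip y z.
Proof. by rewrite ipD_l ipN_l. Qed.

Lemma ipJ x y : ip y x = (ip x y)^*%C.
Proof. by move: hip => h; rewrite /is_inner_product in h; case: h => []. Qed.

Lemma ipD_r x y z : ip z (x + y) = ip z x + ip z y.
Proof. by rewrite (ipJ x z) (ipJ y z) (ipJ (x + y) z) ipD_l rmorphD. Qed.

Lemma ipB_r x y z : ip z (x - y) = ip z x - ip z y.
Proof. by rewrite (ipJ x z) (ipJ y z) (ipJ (x - y) z) ipB_l rmorphB. Qed.

Lemma ip_sum_l (I : Type) (s : seq I) (F : I -> H) z :
  ip (\sum_(i <- s) F i) z = \sum_(i <- s) ip (F i) z.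
Proof.
elim: s => [|a s IH]; first by rewrite !big_nil ip0_l.
by rewrite !big_cons ipD_l IH.
Qed.

Lemma hnorm_sqr x : hnorm ip x ^+ 2 = complex.Re (ip x x).
Proof.
move: hip => h; rewrite /is_inner_product in h; case: h => [_ _ pos _]; have := pos x.
rewrite /hnorm; case: (ip x x) => a b; rewrite lecE /= => /andP[_ a0].
by rewrite sqr_sqrtr.
Qed.

Lemma polar x y :
  complex.Re (ip (x + y) (x + y)) - complex.Re (ip (x - y) (x - y))
  = 4 * complex.Re (ip x y).
Proof.
rewrite (ipD_l x y) !(ipD_r x y) (ipB_l x y) !(ipB_r x y) (ipJ x y).
case: (ip x x) => a1 a2; case: (ip x y) => b1 b2; case: (ip y y) => c1 c2 /=.
lra.
Qed.

Lemma cmod_ipJ x y : cmod (ip y x) = cmod (ip x y).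
Proof. by rewrite ipJ cmodJ. Qed.

End IP.

Section Esum.
Local Open Scope ereal_scope.

Lemma esumZ_le (R : realType) (T : choiceType) (D : set T) (m : R) (f : T -> R) :
  (0 <= m)%R ->
  \esum_(i in D) (m * f i)%:E <= m%:E * \esum_(i in D) (f i)%:E.
Proof.
move=> m0; apply: ge_ereal_sup => _ [X [finX XD] <-].
rewrite fsumEFin // -mulr_fsumr EFinM -fsumEFin //.
apply: lee_wpmul2l; first by rewrite lee_fin.
by apply: ereal_sup_ubound; exists X.
Qed.

Lemma parseval_re (R : realType) (H : lmodType R[i]) (ip : H -> H -> R[i])
  (hip : is_inner_product ip) (J : choiceType) (phi : J -> H)
  (pf : parseval_frame ip phi) (u x : H) :
  (complex.Re (ip u x))%:E <=
  \esum_(j in [set: J]) (cmod (ip u (phi j)) * cmod (ip x (phi j)))%:E.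
Proof.
set S := esum _ _.
have S0 : 0 <= S by apply: esum_ge0 => j _; rewrite lee_fin mulr_ge0 // cmod_ge0.
have E : ((hnorm ip (u + x)) ^+ 2)%:E <= ((hnorm ip (u - x)) ^+ 2)%:E + 4%:E * S.
  rewrite -!pf.
  apply: (@le_trans _ _ (\esum_(j in [set: J]) ((cmod (ip (u - x) (phi j)) ^+ 2)%:E
      + (4 * (cmod (ip u (phi j)) * cmod (ip x (phi j))))%:E))).
    apply: le_esum => j _; rewrite -EFinD lee_fin ipD_l // ipB_l //.
    exact: cmod_key.
  rewrite esumD; last 2 first.
  - by move=> j _; rewrite lee_fin sqr_ge0.
  - by move=> j _; rewrite lee_fin !mulr_ge0 // cmod_ge0.
  by rewrite leeD2l // esumZ_le.
rewrite !hnorm_sqr // in E.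
have P := polar hip u x.
clearbody S; move: E S0; case: S => [s| |] E S0 //=; last by rewrite leey.
rewrite -EFinM -EFinD lee_fin in E; rewrite lee_fin; lra.
Qed.

End Esum.

Section Bound.
Variable R : realType.

Lemma Re_sg (z : R[i]) :
  complex.Re ((z^*)%C * ((cmod z)^-1)%:C%C * z) = cmod z.
Proof.
have -> : forall r : R, complex.Re ((z^*)%C * r%:C%C * z)
    = (r * (complex.Re z ^+ 2 + complex.Im z ^+ 2))%R.
  by move=> r; case: z => a b /=; ring.
rewrite -cmod_sqr expr2 mulrA.
have [->|n0] := eqVneq (cmod z) 0%R; first by rewrite mulr0.
by rewrite mulVf // mul1r.
Qed.

Lemma cmod_sg_le1 (z : R[i]) : (cmod ((z^*)%C * ((cmod z)^-1)%:C%C) <= 1)%R.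
Proof.
rewrite cmodM cmodJ cmod_real ?invr_ge0 ?cmod_ge0 //.
have [->|n0] := eqVneq (cmod z) 0%R; first by rewrite mul0r.
by rewrite divff.
Qed.

Lemma cmod0 : cmod (0 : R[i]) = 0%R.
Proof. by rewrite /cmod /= expr0n /= addr0 sqrtr0. Qed.

Local Open Scope ereal_scope.

Lemma coherence_bound (H : lmodType R[i]) (ip : H -> H -> R[i])
  (hip : is_inner_product ip) (I J : choiceType) (phiA : I -> H) (phiB : J -> H)
  (pfB : parseval_frame ip phiB) (Lam : set I) (m : R) (x : H) :
  (0 <= m)%R ->
  (forall j, \esum_(i in Lam) (cmod (ip (phiA i) (phiB j)))%:E <= m%:E) ->
  coef_l1 ip phiA Lam x <= m%:E * coef_l1 ip phiB [set: J] x.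
Proof.
move=> m0 hm; rewrite /coef_l1.
apply: ge_ereal_sup => _ [X [finX XL] <-].
rewrite fsumEFin // fsbig_finite //=.
set s := finmap.enum_fset _.
pose z i := ip (phiA i) x.
pose sg i := (((z i)^*)%C * ((cmod (z i))^-1)%:C%C)%R.
pose u := (\sum_(i <- s) sg i *: phiA i)%R.
have e1 : (\sum_(i <- s) cmod (ip x (phiA i)))%R = complex.Re (ip u x).
  rewrite /u ip_sum_l //; clear u; clearbody s.
  elim: s => [|a t IH]; first by rewrite !big_nil.
  rewrite !big_cons ReD IH ipZ_l //; congr (_ + _)%R.
  by rewrite cmod_ipJ // -/(z a) /sg Re_sg.
have e2 : forall j, (cmod (ip u (phiB j)) <= m)%R.
  move=> j.
  have h : (cmod (ip u (phiB j)) <= \sum_(i <- s) cmod (ip (phiA i) (phiB j)))%R.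
    rewrite /u ip_sum_l //; clear u e1; clearbody s.
    elim: s => [|a t IH]; first by rewrite !big_nil cmod0.
    rewrite !big_cons; apply: le_trans (cmodD _ _) _; apply: lerD => //.
    rewrite ipZ_l // cmodM.
    have := cmod_sg_le1 (z a); have := cmod_ge0 (ip (phiA a) (phiB j)).
    rewrite -/(sg a); nra.
  rewrite -lee_fin; apply: le_trans (hm j); apply: le_trans (_ : _ <= (\sum_(i <- s) cmod (ip (phiA i) (phiB j)))%R%:E) _.
    by rewrite lee_fin.
  rewrite -sumEFin -fsbig_finite //; apply: ereal_sup_ubound; exists X => //.
rewrite e1; apply: le_trans (parseval_re hip pfB u x) _.
apply: le_trans (esumZ_le _ _ m0); apply: le_esum => j _; rewrite lee_fin.
by apply: ler_wpM2r; [exact: cmod_ge0 | exact: e2].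
Qed.

End Bound.

Local Open Scope classical_set_scope.
Local Open Scope ereal_scope.

Theorem mainTheorem2 (R : realType) (H : lmodType R[i]) (ip : H -> H -> R[i])
  (I J : choiceType) (phi1 : I -> H) (phi2 : J -> H)
  (Lam1 : set I) (Lam2 : set J) :
  separable_hilbert ip ->
  parseval_frame ip phi1 ->
  parseval_frame ip phi2 ->
  kappa1 ip phi1 phi2 Lam1 Lam2 <=
    maxe (cluster_coherence ip Lam1 phi1 phi2)
         (cluster_coherence ip Lam2 phi2 phi1).
Proof.
move=> hH pf1 pf2.
have hip : is_inner_product ip by rewrite /separable_hilbert in hH; case: hH.
rewrite /kappa1; apply: ge_ereal_sup => _ [x [y /= [den0 denoo ->]]].
have A0 : 0 <= coef_l1 ip phi1 [set: I] y.
  by apply: esum_ge0 => i _; rewrite lee_fin cmod_ge0.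
have B0 : 0 <= coef_l1 ip phi2 [set: J] x.
  by apply: esum_ge0 => i _; rewrite lee_fin cmod_ge0.
have [j0 _] : exists j : J, True.
  apply: contrapT => hJ.
  have noJ : forall j : J, False by move=> j; apply: hJ; exists j.
  have Bz : coef_l1 ip phi2 [set: J] x = 0 by apply: esum1 => j; case: (noJ j).
  have y0 : y = 0%R.
    have := pf2 y; rewrite esum1; last by move=> j; case: (noJ j).
    move/esym/eqP; rewrite eqe hnorm_sqr // => /eqP hre.
    move: hip => h; rewrite /is_inner_product in h; case: h => [_ _ pos def].
    apply: def; have := pos y; move: hre; case: (ip y y) => a b /= ->.
    by rewrite lecE /=; move=> /andP[/eqP ->].
  have Az : coef_l1 ip phi1 [set: I] y = 0.
    by apply: esum1 => i _; rewrite y0 ip0_l // cmod0.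
  by move: den0; rewrite Az Bz adde0 ltxx.
set mu1 := cluster_coherence ip Lam1 phi1 phi2.
set mu2 := cluster_coherence ip Lam2 phi2 phi1.
have hm1 : forall j, \esum_(i in Lam1) (cmod (ip (phi1 i) (phi2 j)))%:E <= maxe mu1 mu2.
  move=> j; rewrite le_max; apply/orP; left.
  by apply: ereal_sup_ubound; exists j.
have hm2 : forall i, \esum_(j in Lam2) (cmod (ip (phi2 j) (phi1 i)))%:E <= maxe mu1 mu2.
  move=> i; rewrite le_max; apply/orP; right.
  by apply: ereal_sup_ubound; exists i.
have M0 : 0 <= maxe mu1 mu2.
  by apply: le_trans (hm1 j0); apply: esum_ge0 => i _; rewrite lee_fin cmod_ge0.
move: hm1 hm2 M0; case: (maxe mu1 mu2) => [m| |] hm1 hm2 M0 //; last by rewrite leey.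
rewrite lee_fin in M0.
have n1 := coherence_bound hip pf2 x M0 hm1.
have n2 := coherence_bound hip pf1 y M0 hm2.
set A := coef_l1 ip phi1 [set: I] y in A0 den0 denoo n2 *.
set B := coef_l1 ip phi2 [set: J] x in B0 den0 denoo n1 *.
set N1 := coef_l1 ip phi1 Lam1 x in n1 *.
set N2 := coef_l1 ip phi2 Lam2 y in n2 *.
have N10 : 0 <= N1 by apply: esum_ge0 => i _; rewrite lee_fin cmod_ge0.
have N20 : 0 <= N2 by apply: esum_ge0 => i _; rewrite lee_fin cmod_ge0.
have Afin : A \is a fin_num.
  by rewrite ge0_fin_numE // (le_lt_trans _ denoo) // leeDl.
have Bfin : B \is a fin_num.
  by rewrite ge0_fin_numE // (le_lt_trans _ denoo) // leeDr.
have N1fin : N1 \is a fin_num.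
  rewrite ge0_fin_numE // (le_lt_trans n1) // lte_mul_pinfty //.
  by rewrite ge0_fin_numE in Bfin.
have N2fin : N2 \is a fin_num.
  rewrite ge0_fin_numE // (le_lt_trans n2) // lte_mul_pinfty //.
  by rewrite ge0_fin_numE in Afin.
move: n1 n2 den0 A0 B0.
rewrite -(fineK Afin) -(fineK Bfin) -(fineK N1fin) -(fineK N2fin).
set a := fine A; set b := fine B; set p := fine N1; set q := fine N2.
rewrite -!EFinM -!EFinD !lee_fin !lte_fin => n1 n2 den0 A0 B0.
rewrite inver gt_eqF // -EFinM lee_fin ler_pdivrMr //.
lra.
Qed.
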